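(* There is an absolute constant $\tilde C\in\mathbb{R}^+$ such that the following holds. Fix $\epsilon,\eta\in(0,1/2)$ and $d\ge2$. Let $\mathcal{L}$ be an $r$-dimensional subspace of $\mathbb{C}^{n_1\times\cdots\times n_d}$ spanned by a basis of rank-one tensors $\mathcal{B}=\{\bigcirc_{\ell=1}^d\mathbf{y}^{(\ell)}_k:k\in[r]\}$ (with $\|\mathbf{y}^{(\ell)}_k\|_2=1$) whose modewise coherence satisfies $\mu_{\mathcal{B}}^{d-1}<1/(2r)$. For each $j\in[d]$ draw $\mathbf{A}_j\in\mathbb{C}^{m_j\times n_j}$ with $$m_j\ge\tilde C\cdot r^{2/d}d^2\epsilon^{-2}\ln(2r^2d/\eta)$$ from an $(\eta/d)$-optimal family of JL embedding distributions. Then with probability at least $1-\eta$, $$\big|\|\mathcal{Y}\times_1\mathbf{A}_1\cdots\times_d\mathbf{A}_d\|^2-\|\mathcal{Y}\|^2\big|\le\epsilon\|\mathcal{Y}\|^2\quad\text{for all }\mathcal{Y}\in\mathcal{L}.$$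
   Context: Tensors carry the inner product $\langle\mathcal{X},\mathcal{Y}\rangle=\sum\mathcal{X}_{i_1\dots i_d}\overline{\mathcal{Y}_{i_1\dots i_d}}$ and norm $\|\cdot\|$; $\bigcirc$ is the outer product; $(\mathcal{Z}\times_j\mathbf{U})_{i_1,\dots,\ell,\dots,i_d}=\sum_{i_j}\mathcal{Z}_{i_1,\dots,i_j,\dots,i_d}\mathbf{U}_{\ell,i_j}$. $\mu_{\mathcal{B}}=\max_{\ell\in[d]}\max_{k\ne h}|\langle\mathbf{y}^{(\ell)}_k,\mathbf{y}^{(\ell)}_h\rangle|$. A matrix $\mathbf{A}\in\mathbb{C}^{m\times n}$ is an $\epsilon$-JL embedding of $S$ if $\|\mathbf{A}x\|_2^2=(1+\epsilon_x)\|x\|_2^2$ with $\epsilon_x\in(-\epsilon,\epsilon)$ for all $x\in S$. For $\eta\in(0,1/2)$, a family $\{\mathcal{D}_{(m,n)}\}$ of distributions over $m\times n$ matrices is $\eta$-optimal if there is an absolute $C>0$ such that for all $\epsilon\in(0,1)$, $m<n$, and nonempty $S\subset\mathbb{C}^n$ with $|S|\le\eta\exp(\epsilon^2m/C)$, $\mathbf{A}\sim\mathcal{D}_{(m,n)}$ is an $\epsilon$-JL embedding of $S$ with probability at least $1-\eta$. *)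

(* Defs.v *)
From HB Require Import structures.
From mathcomp Require Import all_boot all_order all_algebra.
From mathcomp Require Import all_classical all_reals all_analysis.
From mathcomp Require Import complex.

Set Implicit Arguments.
Unset Strict Implicit.
Unset Printing Implicit Defensive.

Import Order.TTheory GRing.Theory Num.Theory.
Local Open Scope ring_scope.
Local Open Scope classical_set_scope.

(* R[i] is pointed (by 0), so that matrices over it are pointed;, needed for the generated sigma-algebra *)
HB.instance Definition _ (R : realType) := isPointed.Build R[i] 0.

Section Defs.
Variable R : realType.
Local Notation C := R[i].

Definition sqmod (z : C) : R := complex.Re z ^+ 2 + complex.Im z ^+ 2.
Definition cmod (z : C) : R := Num.sqrt (sqmod z).

Definition vdot n (x y : 'cV[C]_n) : C :=
  \sum_(i < n) x i 0 * conjc (y i 0).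
Definition vsqnorm n (x : 'cV[C]_n) : R := \sum_(i < n) sqmod (x i 0).

Definition JL_embedding m n (eps : R) (A : 'M[C]_(m, n)) (S : seq 'cV[C]_n) :=
  forall x, x \in S ->
    exists epsx : R, - eps < epsx < eps /\
      vsqnorm (A *m x) = (1 + epsx) * vsqnorm x.

(* Borel sigma-algebra on C^{m x n}: generated by Re/Im of the entries *)
Definition mx_gen m n : set (set 'M[C]_(m, n)) :=
  [set E | exists (i : 'I_m) (j : 'I_n) (B : set R), measurable B /\
      (E = (fun A : 'M[C]_(m, n) => complex.Re (A i j)) @^-1` B \/
       E = (fun A : 'M[C]_(m, n) => complex.Im (A i j)) @^-1` B)].



Arguments mx_gen : clear implicits.
Local Notation mxT m n := (g_sigma_algebraType (mx_gen m n)).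

(* "event E holds with probability at least p" (inner probability) *)
Definition prob_atleast d (T : measurableType d) (P : probability T R)
    (E : set T) (p : R) :=
  exists F : set T, [/\ measurable F, F `<=` E & (p%:E <= P F)%E].

Definition mx_family := forall m n : nat, probability (mxT m n) R.

(* eta-optimal family, with its absolute constant C0 made explicit *)
Definition eta_optimal (C0 eta : R) (D : mx_family) :=
  forall (eps : R) (m n : nat) (S : seq 'cV[C]_n),
    0 < eps < 1 -> (m < n)%N -> uniq S -> S != [::] ->
    (size S)%:R <= eta * expR (eps ^+ 2 * m%:R / C0) ->
    prob_atleast (D m n) [set A : mxT m n | JL_embedding eps A S] (1 - eta).

Definition midx d (n : 'I_d -> nat) := {dffun forall j : 'I_d, 'I_(n j)}.
Definition tensor d (n : 'I_d -> nat) := midx n -> C.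

Definition tsqnorm d (n : 'I_d -> nat) (X : tensor n) : R :=
  \sum_(i : midx n) sqmod (X i).

Definition outer d (n : 'I_d -> nat) (y : forall l : 'I_d, 'cV[C]_(n l))
  : tensor n := fun i => \prod_(l < d) y l (i l) 0.

(* Y x_1 A_1 x_2 ... x_d A_d  (all d mode products, written out) *)
Definition multi_mode_prod d (n m : 'I_d -> nat) (Y : tensor n)
  (A : forall j : 'I_d, 'M[C]_(m j, n j)) : tensor m :=
  fun l => \sum_(i : midx n) Y i * \prod_(j < d) A j (l j) (i j).

Definition lincomb d (n : 'I_d -> nat) r (T : 'I_r -> tensor n) (c : 'I_r -> C)
  : tensor n := fun i => \sum_(k < r) c k * T k i.

Definition coherence d (n : 'I_d -> nat) r
  (y : 'I_r -> forall l : 'I_d, 'cV[C]_(n l)) : R :=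
  \big[Num.max/0]_(l < d) \big[Num.max/0]_(k < r)
     \big[Num.max/0]_(h < r | h != k) cmod (vdot (y k l) (y h l)).

Definition mutually_independent dO (O : measurableType dO) (P : probability O R)
  d (m n : 'I_d -> nat) (A : forall j : 'I_d, O -> mxT (m j) (n j)) :=
  forall E : forall j : 'I_d, set (mxT (m j) (n j)),
    (forall j, measurable (E j)) ->
    P [set w | forall j, E j (A j w)] = (\prod_(j < d) P (A j @^-1` E j))%E.

End Defs.

Arguments mx_gen : clear implicits.

Notation mxT R m n := (g_sigma_algebraType (mx_gen R m n)).

(* Main.v *)
Require Import Defs.
From HB Require Import structures.
From mathcomp Require Import all_boot all_order all_algebra.
From mathcomp Require Import all_classical all_reals all_analysis.
From mathcomp Require Import complex.
From mathcomp Require Import ring lra zify.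

Import Order.TTheory GRing.Theory Num.Theory.

Module MH.
Set Implicit Arguments.
Unset Strict Implicit.
Unset Printing Implicit Defensive.
Local Open Scope ring_scope.
Local Open Scope classical_set_scope.
Local Open Scope complex_scope.
Section N.
Variable R : realType.
Local Notation C := R[i].
Definition nrm (z : C) : R := complex.Re `|z|.
Lemma nrmE (z : C) : nrm z = Num.sqrt (complex.Re z ^+ 2 + complex.Im z ^+ 2).
Proof. by rewrite /nrm normc_def. Qed.
Lemma normE (z : C) : `|z| = (nrm z)%:C.
Proof. by rewrite nrmE normc_def. Qed.
Lemma cmodE (z : C) : cmod z = nrm z.
Proof. by rewrite nrmE. Qed.
Lemma sqmodE (z : C) : sqmod z = nrm z ^+ 2.
Proof. by rewrite nrmE sqr_sqrtr // addr_ge0 // sqr_ge0. Qed.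
Lemma sqmodC (z : C) : (sqmod z)%:C = z * z^*.
Proof. by case: z => a b; rewrite /sqmod /=; simpc; congr (_ +i* _); rewrite /= ?expr2; ring. Qed.
Lemma nrm_ge0 (z : C) : 0 <= nrm z.
Proof. by have := normr_ge0 z; rewrite normE ler0c. Qed.
Lemma nrmM (x y : C) : nrm (x * y) = nrm x * nrm y.
Proof. by apply: complexI; rewrite rmorphM /= -!normE normrM. Qed.
Lemma nrmD (x y : C) : nrm (x + y) <= nrm x + nrm y.
Proof. by rewrite -lecR rmorphD /= -!normE ler_normD. Qed.
Lemma nrmN (x : C) : nrm (- x) = nrm x.
Proof. by apply: complexI; rewrite -!normE normrN. Qed.
Lemma nrmR (x : R) : nrm x%:C = `|x|.
Proof. by rewrite nrmE /= expr0n addr0 sqrtr_sqr. Qed.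
Lemma nrmJ (x : C) : nrm x^* = nrm x.
Proof. by case: x => a b; rewrite !nrmE /= sqrrN. Qed.
Lemma nrm_sum I (s : seq I) (P : pred I) (F : I -> C) :
  nrm (\sum_(i <- s | P i) F i) <= \sum_(i <- s | P i) nrm (F i).
Proof.
rewrite -lecR rmorph_sum /= -normE.

apply: le_trans (ler_norm_sum _ _ _) _.
by rewrite le_eqVlt; apply/orP; left; apply/eqP; apply: eq_bigr => i _; rewrite normE.
Qed.
Lemma nrm_prod I (s : seq I) (P : pred I) (F : I -> C) :
  nrm (\prod_(i <- s | P i) F i) = \prod_(i <- s | P i) nrm (F i).
Proof.
apply: complexI; rewrite rmorph_prod /= -normE.
rewrite normr_prod; apply: eq_bigr => i _; by rewrite normE.
Qed.
Lemma Re_le_nrm (z : C) : complex.Re z <= nrm z.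
Proof. rewrite nrmE; case: z => a b /=. apply: le_trans (ler_norm a) _. rewrite -sqrtr_sqr ler_sqrt ?addr_ge0 ?sqr_ge0 // lerDl sqr_ge0 //. Qed.
End N.

End MH.
Import MH.

Module MH2.
Set Implicit Arguments.
Unset Strict Implicit.
Unset Printing Implicit Defensive.
Local Open Scope ring_scope.

Section Distr.
Variable K : comNzRingType.
Variables (d : nat) (n : 'I_d -> nat).

Lemma sum_midx (F : forall j : 'I_d, 'I_(n j) -> K) :
  \sum_(i : midx n) \prod_(j < d) F j (i j) = \prod_(j < d) \sum_(t < n j) F j t.
Proof.
set N := (\max_(j < d) n j).
have Hn j : (n j <= N)%N by apply: (leq_bigmax j).
pose Fn j (k : nat) : K := oapp (F j) 0 (insub k).
pose G j (t : 'I_N) := Fn j t.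
have E1 j : \sum_(t < n j) F j t = \sum_(t < N) G j t.
  transitivity (\sum_(t < n j) Fn j t).
    by apply: eq_bigr => t _; rewrite /Fn valK.
  rewrite (big_ord_widen _ (Fn j) (Hn j)) big_mkcond /=.
  apply: eq_bigr => t _; rewrite /G /Fn.
  case: ifP => // /negbT Ht; by rewrite insubF // (negbTE Ht).
rewrite (eq_bigr _ (fun j _ => E1 j)) bigA_distr_bigA /=.
pose phi (i : midx n) : {ffun 'I_d -> 'I_N} := [ffun j => widen_ord (Hn j) (i j)].
rewrite (bigID (mem (phi @: (finset.setT : {set midx n})))) /=.
rewrite [X in _ = _ + X]big1; last first.
  move=> f Hf.
  have [j Hj] : exists j, ~~ (f j < n j)%N.
    apply/existsP; apply: contraR Hf => /existsPn H.
    have H' j : (f j < n j)%N by have := H j; rewrite negbK.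
    apply/imsetP; exists (@finfun _ (fun j => 'I_(n j)) (fun j => Ordinal (H' j))) => //.
    by apply/ffunP => j; apply: val_inj; rewrite /phi !ffunE /=.
  rewrite (bigD1 j) //= /G /Fn insubF ?mul0r //.
  by apply: negbTE.
rewrite addr0 big_imset /=; last first.
  move=> i1 i2 _ _ /ffunP H; apply/ffunP => j; apply: val_inj.
  by have := H j; rewrite !ffunE => /(congr1 val).
apply: eq_big => // i; first by rewrite inE.
move=> _; apply: eq_bigr => j _; rewrite /G /phi ffunE /Fn /=.
by rewrite valK.
Qed.
End Distr.

End MH2.
Import MH2.

Module MH3.
Set Implicit Arguments.
Unset Strict Implicit.
Unset Printing Implicit Defensive.
Local Open Scope ring_scope.
Local Open Scope complex_scope.

Section Tens.
Variable R : realType.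
Local Notation C := R[i].
Variables (d : nat) (n m : 'I_d -> nat) (r : nat).

Lemma mmp_lincomb (y : 'I_r -> forall l : 'I_d, 'cV[C]_(n l)) (c : 'I_r -> C)
  (A : forall j : 'I_d, 'M[C]_(m j, n j)) :
  multi_mode_prod (lincomb (fun k => outer (y k)) c) A =
  lincomb (fun k => outer (fun j => A j *m y k j)) c.
Proof.
apply: funext => l; rewrite /multi_mode_prod /lincomb /outer.
under eq_bigr do rewrite mulr_suml.
rewrite exchange_big /=; apply: eq_bigr => k _.
under eq_bigr do rewrite -mulrA -big_split /=.
rewrite -mulr_sumr; congr (_ * _).
rewrite (@sum_midx _ _ _ (fun j t => y k j t 0 * A j (l j) t)).
by apply: eq_bigr => j _; rewrite mxE; apply: eq_bigr => t _; rewrite mulrC.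
Qed.

Lemma tsq_lincomb (z : 'I_r -> forall l : 'I_d, 'cV[C]_(n l)) (c : 'I_r -> C) :
  (tsqnorm (lincomb (fun k => outer (z k)) c))%:C =
  \sum_(k < r) \sum_(h < r) c k * (c h)^* * \prod_(j < d) vdot (z k j) (z h j).
Proof.
rewrite /tsqnorm rmorph_sum /=.
under eq_bigr do rewrite sqmodC /lincomb /outer rmorph_sum mulr_suml.
rewrite exchange_big /=; apply: eq_bigr => k _.
under eq_bigr do rewrite mulr_sumr.
rewrite exchange_big /=; apply: eq_bigr => h _.
under eq_bigr => i _ do rewrite rmorphM rmorph_prod /= mulrACA -big_split /=.
rewrite -mulr_sumr; congr (_ * _).
rewrite (@sum_midx _ _ _ (fun j t => z k j t 0 * (z h j t 0)^*)).
by [].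
Qed.
End Tens.

End MH3.
Import MH3.

Module MH4.
Set Implicit Arguments.
Unset Strict Implicit.
Unset Printing Implicit Defensive.
Local Open Scope ring_scope.
Local Open Scope complex_scope.

Section Polar.
Variable R : realType.
Local Notation C := R[i].

Lemma polar1 (a b : C) :
  \sum_(t < 4) 'i ^+ t * ((a + 'i ^+ t * b) * (a + 'i ^+ t * b)^*) = 4%:R * (a * b^*).
Proof.
rewrite !big_ord_recl big_ord0 /=.
rewrite -(rmorph_nat (real_complex R) 4).
case: a => a1 a2; case: b => b1 b2.
rewrite /= !exprS !expr0 !mulr1.
simpc.
by congr (_ +i* _); ring.
Qed.

Lemma vsqC n (x : 'cV[C]_n) : (vsqnorm x)%:C = vdot x x.
Proof. by rewrite /vsqnorm rmorph_sum; apply: eq_bigr => i _; exact: sqmodC. Qed.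

Lemma polar n (u v : 'cV[C]_n) :
  \sum_(t < 4) 'i ^+ t * (vsqnorm (u + 'i ^+ t *: v))%:C = 4%:R * vdot u v.
Proof.
under eq_bigr do rewrite vsqC /vdot mulr_sumr.
rewrite exchange_big /= /vdot mulr_sumr; apply: eq_bigr => x _.
rewrite -polar1; apply: eq_bigr => t _.
by rewrite !mxE.
Qed.

Lemma nrm_i t : nrm ('i ^+ t : C) = 1.
Proof.
elim: t => [|t IH]; first by rewrite expr0 nrmE /= expr0n /= expr1n addr0 sqrtr1.
by rewrite exprS nrmM IH mulr1 nrmE /= expr0n /= expr1n add0r sqrtr1.
Qed.

Lemma sqmod_ge0 (z : C) : 0 <= sqmod z.
Proof. by rewrite sqmodE sqr_ge0. Qed.

Lemma vsq_ge0 n (x : 'cV[C]_n) : 0 <= vsqnorm x.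
Proof. by apply: sumr_ge0 => i _; apply: sqmod_ge0. Qed.

Lemma vsq_comb n (u v : 'cV[C]_n) (s : C) : nrm s = 1 ->
  vsqnorm (u + s *: v) <= 2 * vsqnorm u + 2 * vsqnorm v.
Proof.
move=> hs; rewrite /vsqnorm !mulr_sumr -big_split /=; apply: ler_sum => i _.
rewrite !mxE !sqmodE.
have h1 := nrmD (u i 0) (s * v i 0); rewrite nrmM hs mul1r in h1.
have h2 := nrm_ge0 (u i 0 + s * v i 0).
have h3 := nrm_ge0 (u i 0); have h4 := nrm_ge0 (v i 0).
have h5 : nrm (u i 0 + s * v i 0) * nrm (u i 0 + s * v i 0) <= (nrm (u i 0) + nrm (v i 0)) * (nrm (u i 0) + nrm (v i 0)) by apply: ler_pM.
have h6 := sqr_ge0 (nrm (u i 0) - nrm (v i 0)).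
rewrite !expr2 in h6 *. nra.
Qed.

Lemma gram_err m n (A : 'M[C]_(m, n)) (u v : 'cV[C]_n) (e : R) :
  (forall t : 'I_4, exists ex : R, - e < ex < e /\
     vsqnorm (A *m (u + 'i ^+ t *: v)) = (1 + ex) * vsqnorm (u + 'i ^+ t *: v)) ->
  vsqnorm u = 1 -> vsqnorm v = 1 ->
  nrm (vdot (A *m u) (A *m v) - vdot u v) <= 4 * e.
Proof.
move=> H hu hv.
have key : 4%:R * (vdot (A *m u) (A *m v) - vdot u v) =
   \sum_(t < 4) 'i ^+ t * (vsqnorm (A *m (u + 'i ^+ t *: v)) - vsqnorm (u + 'i ^+ t *: v))%:C.
  rewrite mulrBr -!polar -sumrB; apply: eq_bigr => t _.
  by rewrite rmorphB /= mulrBr mulmxDr scalemxAr.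
have : nrm (4%:R * (vdot (A *m u) (A *m v) - vdot u v)) <= 16 * e.
  rewrite key; apply: le_trans (nrm_sum _ _ _) _.
  have -> : 16 * e = \sum_(t < 4) (4 * e) by rewrite sumr_const card_ord; lra.
  apply: ler_sum => t _; rewrite nrmM nrm_i mul1r nrmR.
  have [ex [/andP [h1 h2] ->]] := H t.
  have hb := vsq_comb u v (nrm_i t); rewrite hu hv in hb.
  have h0 := vsq_ge0 (u + 'i ^+ t *: v).
  rewrite (_ : (1 + ex) * vsqnorm (u + 'i ^+ t *: v) - vsqnorm (u + 'i ^+ t *: v) = ex * vsqnorm (u + 'i ^+ t *: v)); last by ring.
  rewrite normrM (ger0_norm h0).
  have : `|ex| <= e by rewrite ler_norml; apply/andP; split; lra.
  have := normr_ge0 ex. nra.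
rewrite nrmM -(rmorph_nat (real_complex R) 4) nrmR ger0_norm //.
have := nrm_ge0 (vdot (A *m u) (A *m v) - vdot u v). lra.
Qed.
End Polar.

End MH4.
Import MH4.

Module MH5.
Set Implicit Arguments.
Unset Strict Implicit.
Unset Printing Implicit Defensive.
Local Open Scope ring_scope.
Local Open Scope complex_scope.

Section Core.
Variable R : realType.
Local Notation C := R[i].

Lemma prod_nrm_le I (s : seq I) (a : I -> C) (b : I -> R) :
  (forall j, nrm (a j) <= b j) -> nrm (\prod_(j <- s) a j) <= \prod_(j <- s) b j.
Proof.
move=> H; rewrite nrm_prod; elim: s => [|x s IH]; first by rewrite !big_nil.
rewrite !big_cons; apply: ler_pM => //; first exact: nrm_ge0.
by apply: prodr_ge0 => j _; apply: nrm_ge0.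
Qed.

Lemma prod_err I (s : seq I) (a g : I -> C) (b : I -> R) (del : R) :
  (forall j, nrm (g j) <= b j) -> (forall j, nrm (a j - g j) <= del) ->
  nrm (\prod_(j <- s) a j - \prod_(j <- s) g j) <=
    \prod_(j <- s) (b j + del) - \prod_(j <- s) b j.
Proof.
move=> Hg Ha; elim: s => [|x s IH]; first by rewrite !big_nil subrr nrmE /= expr0n /= add0r sqrtr0.
rewrite !big_cons.
have Ha' j : nrm (a j) <= b j + del.
  have := nrmD (a j - g j) (g j); rewrite subrK. have := Hg j; have := Ha j. lra.
have hA := prod_nrm_le s Ha'.
have e : a x * \prod_(j <- s) a j - g x * \prod_(j <- s) g j =
   (a x - g x) * \prod_(j <- s) a j + g x * (\prod_(j <- s) a j - \prod_(j <- s) g j) by ring.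
rewrite e; apply: le_trans (nrmD _ _) _; rewrite !nrmM.
have h1 := Ha x; have h2 := Hg x.
have h3 := nrm_ge0 (a x - g x); have h4 := nrm_ge0 (g x).
have h5 := nrm_ge0 (\prod_(j <- s) a j).
have h6 := nrm_ge0 (\prod_(j <- s) a j - \prod_(j <- s) g j).
set PA := nrm (\prod_(j <- s) a j) in hA h5 *.
set PD := nrm (\prod_(j <- s) a j - \prod_(j <- s) g j) in IH h6 *.
set Pb := \prod_(j <- s) (b j + del) in hA IH *.
set Pg := \prod_(j <- s) b j in IH *.
have hdel : 0 <= del by apply: le_trans (h3) h1.
have hb : 0 <= b x by apply: le_trans h4 h2.
have t1 : nrm (a x - g x) * PA <= del * Pb by apply: ler_pM.
have t2 : nrm (g x) * PD <= b x * (Pb - Pg) by apply: ler_pM.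
lra.
Qed.

Lemma sum_const_ord (r : nat) (a : R) : \sum_(i < r) a = a *+ r.
Proof. by rewrite sumr_const card_ord. Qed.

Lemma sum_pair_le (r : nat) (x : 'I_r -> R) :
  \sum_(k < r) \sum_(h < r) x k * x h <= r%:R * \sum_(k < r) x k ^+ 2.
Proof.
apply: (@le_trans _ _ (\sum_(k < r) \sum_(h < r) (x k ^+ 2 / 2 + x h ^+ 2 / 2))).
  apply: ler_sum => k _; apply: ler_sum => h _.
  by rewrite -mulrDl; apply: (leif_mean_square (x k) (x h)).1.
have e1 k : \sum_(h < r) (x k ^+ 2 / 2 + x h ^+ 2 / 2) = (x k ^+ 2 / 2) *+ r + \sum_(h < r) x h ^+ 2 / 2.
  rewrite big_split /= (sum_const_ord r (x k ^+ 2 / 2)); reflexivity.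
rewrite (eq_bigr _ (fun k _ => e1 k)).
rewrite big_split /=.
rewrite (sum_const_ord r (\sum_(h < r) x h ^+ 2 / 2)).
rewrite sumrMnl.
rewrite -mulr_suml.
rewrite -mulrnDl -splitr mulr_natl; exact: lexx.
Qed.

Lemma sum_diag (r : nat) (k : 'I_r) (f : 'I_r -> R) :
  \sum_(h < r) f h * (k == h)%:R = f k.
Proof.
rewrite (bigD1 k) //= eqxx mulr1 big1 ?addr0 //.
by move=> h /negbTE; rewrite eq_sym => ->; rewrite mulr0.
Qed.

Variables (d r : nat) (c : 'I_r -> C).
Definition Qf (f : 'I_d -> 'I_r -> 'I_r -> C) : C :=
  \sum_(k < r) \sum_(h < r) c k * (c h)^* * \prod_(j < d) f j k h.
Definition Sc : R := \sum_(k < r) nrm (c k) ^+ 2.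

Lemma Sc_ge0 : 0 <= Sc.
Proof. by apply: sumr_ge0 => k _; apply: sqr_ge0. Qed.

Lemma errQ2 (P1 P2 : 'I_r -> 'I_r -> C) (E : 'I_r -> 'I_r -> R) :
  (forall k h, nrm (P1 k h - P2 k h) <= E k h) ->
  nrm (\sum_(k < r) \sum_(h < r) c k * (c h)^* * P1 k h -
       \sum_(k < r) \sum_(h < r) c k * (c h)^* * P2 k h)
    <= \sum_(k < r) \sum_(h < r) nrm (c k) * nrm (c h) * E k h.
Proof.
move=> HE; rewrite -sumrB.
apply: le_trans (nrm_sum _ _ _) _; apply: ler_sum => k _.
rewrite -sumrB; apply: le_trans (nrm_sum _ _ _) _; apply: ler_sum => h _.
rewrite -mulrBr !nrmM nrmJ; apply: ler_wpM2l; last exact: HE.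
by apply: mulr_ge0; apply: nrm_ge0.
Qed.

Lemma errQ (a g : 'I_d -> 'I_r -> 'I_r -> C) (E : 'I_r -> 'I_r -> R) :
  (forall k h, nrm (\prod_(j < d) a j k h - \prod_(j < d) g j k h) <= E k h) ->
  nrm (Qf a - Qf g) <= \sum_(k < r) \sum_(h < r) nrm (c k) * nrm (c h) * E k h.
Proof.
move=> HE; rewrite /Qf -sumrB.
apply: le_trans (nrm_sum _ _ _) _; apply: ler_sum => k _.
rewrite -sumrB; apply: le_trans (nrm_sum _ _ _) _; apply: ler_sum => h _.
rewrite -mulrBr !nrmM nrmJ; apply: ler_wpM2l; last exact: HE.
by apply: mulr_ge0; apply: nrm_ge0.
Qed.

Lemma errA (a g : 'I_d -> 'I_r -> 'I_r -> C) (del mu : R) :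
  0 <= del -> 0 <= mu ->
  (forall j k h, nrm (a j k h - g j k h) <= del) ->
  (forall j k, g j k k = 1) ->
  (forall j k h, k != h -> nrm (g j k h) <= mu) ->
  nrm (Qf a - Qf g) <=
    ((1 + del) ^+ d - 1 + r%:R * ((mu + del) ^+ d - mu ^+ d)) * Sc.
Proof.
move=> hdel hmu Hd Hg1 Hgo.
set Ed := (1 + del) ^+ d - 1.
set Eo := (mu + del) ^+ d - mu ^+ d.
have Eo0 : 0 <= Eo.
  rewrite /Eo subr_ge0; apply: lerXn2r; rewrite ?nnegrE //; first exact: addr_ge0.
  by rewrite lerDl.
apply: le_trans (errQ (E := fun k h => (k == h)%:R * Ed + Eo) _) _.
  move=> k h; case: (eqVneq k h) => [<-|nkh].
    apply: (le_trans (@prod_err _ (index_enum 'I_d) (fun j => a j k k) (fun j => g j k k) (fun=> 1) del _ _)).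
    - by move=> j; rewrite /= Hg1 nrmE /= expr0n /= expr1n addr0 sqrtr1.
    - by move=> j; apply: Hd.
    rewrite !prodr_const card_ord expr1n (_ : true%:R = 1 :> R) // mul1r lerDl; exact: Eo0.
  apply: (le_trans (@prod_err _ (index_enum 'I_d) (fun j => a j k h) (fun j => g j k h) (fun=> mu) del _ _)).
  - by move=> j; apply: Hgo.
  - by move=> j; apply: Hd.
  rewrite !prodr_const card_ord (_ : false%:R = 0 :> R) // mul0r add0r; exact: lexx.
rewrite (_ : \sum_(k < r) \sum_(h < r) nrm (c k) * nrm (c h) * ((k == h)%:R * Ed + Eo) =
   Ed * Sc + Eo * \sum_(k < r) \sum_(h < r) nrm (c k) * nrm (c h)); last first.
  rewrite /Sc !mulr_sumr -big_split; apply: eq_bigr => k _ /=.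
  rewrite expr2 -(sum_diag k (fun h => nrm (c k) * nrm (c h))) !mulr_sumr -big_split.
  apply: eq_bigr => h _ /=; ring.
rewrite (_ : (Ed + r%:R * Eo) * Sc = Ed * Sc + Eo * (r%:R * Sc)); last by ring.
rewrite lerD2l; apply: ler_wpM2l => //.
exact: (sum_pair_le (fun k => nrm (c k))).
Qed.

Lemma errB (g : 'I_d -> 'I_r -> 'I_r -> C) (mu : R) :
  0 <= mu ->
  (forall j k, g j k k = 1) ->
  (forall j k h, k != h -> nrm (g j k h) <= mu) ->
  nrm (Qf g - Sc%:C) <= mu ^+ d * r%:R * Sc.
Proof.
move=> hmu Hg1 Hgo.
have eS : Sc%:C = \sum_(k < r) \sum_(h < r) c k * (c h)^* * (k == h)%:R.
  rewrite /Sc rmorph_sum; apply: eq_bigr => k _.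
  rewrite (bigD1 k) //= eqxx mulr1 big1 ?addr0.
    by rewrite -sqmodC sqmodE.
  by move=> h /negbTE; rewrite eq_sym => ->; rewrite mulr0.
rewrite eS /Qf.
apply: le_trans (errQ2 (E := fun _ _ => mu ^+ d) _) _.
  move=> k h; case: (eqVneq k h) => [<-|nkh].
    rewrite (eq_bigr (fun=> 1)); last by move=> j _; rewrite Hg1.
    rewrite prodr_const expr1n subrr nrmE /= expr0n /= addr0 sqrtr0.
    exact: exprn_ge0.
  rewrite subr0; have := prod_nrm_le (index_enum 'I_d) (a := fun j => g j k h) (b := fun=> mu).
  rewrite prodr_const card_ord; apply=> j; exact: Hgo.
rewrite (_ : \sum_(k < r) \sum_(h < r) nrm (c k) * nrm (c h) * mu ^+ d =
   mu ^+ d * \sum_(k < r) \sum_(h < r) nrm (c k) * nrm (c h)); last first.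
  rewrite mulr_sumr; apply: eq_bigr => k _; rewrite mulr_sumr; apply: eq_bigr => h _.
  exact: mulrC.
rewrite -mulrA; apply: ler_wpM2l; first exact: exprn_ge0.
exact: (sum_pair_le (fun k => nrm (c k))).
Qed.
End Core.

End MH5.
Import MH5.

Module MH6.
Set Implicit Arguments.
Unset Strict Implicit.
Unset Printing Implicit Defensive.
Local Open Scope ring_scope.

Section Num.
Variable R : realType.

Lemma bern (x : R) (k : nat) : 0 <= x -> 2 * k%:R * x <= 1 -> (1 + x) ^+ k <= 1 + 2 * k%:R * x.
Proof.
move=> hx; elim: k => [|k IH] h; first by rewrite expr0 mulr0 mul0r addr0.
have hk : 2 * k%:R * x <= 1.
  apply: le_trans h; apply: ler_wpM2r => //; apply: ler_wpM2l => //; rewrite ler_nat; exact: leqnSn.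
have := IH hk; rewrite exprS -natr1 => h1.
have h2 : (1 + x) * (1 + x) ^+ k <= (1 + x) * (1 + 2 * k%:R * x).
  by apply: ler_wpM2l => //; lra.
apply: le_trans h2 _.
rewrite -natr1 in h.
have hk0 : 0 <= k%:R :> R by apply: ler0n.
nra.
Qed.

Lemma pow_le_self (y : R) (d : nat) : 0 <= y -> y <= 1 -> (1 <= d)%N -> y ^+ d <= y.
Proof.
move=> h0 h1; case: d => [//|d] _.
rewrite exprS; have h := exprn_ile1 d h0 h1; have h2 := exprn_ge0 d h0; nra.
Qed.

Lemma numeric (eps mu al : R) (d r : nat) :
  0 < eps -> eps < 1 / 2 -> (2 <= d)%N -> (1 <= r)%N -> 1 <= al -> al ^+ d = r%:R ->
  0 <= mu -> mu ^+ d.-1 < 1 / (2 * r%:R) ->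
  (1 + eps / (12 * d%:R * al)) ^+ d - 1 +
    r%:R * ((mu + eps / (12 * d%:R * al)) ^+ d - mu ^+ d) <= eps / 2.
Proof.
move=> he1 he2 hd hr hal hald hmu hc.
have hd1 : (0 < d)%N by apply: leq_trans hd.
have hdn : (d != 0)%N by rewrite -lt0n.
set del := eps / (12 * d%:R * al).
have hD : 2 <= d%:R :> R by rewrite (ler_nat R 2 d).
have hR : 1 <= r%:R :> R by rewrite (ler_nat R 1 r).
have hal0 : 0 < al by lra.
set x := d%:R * del.
have hx12 : x * (12 * al) = eps.
  rewrite /x /del; field; apply/andP; split; rewrite ?pnatr_eq0 ?gt_eqF ?hdn //.
have hx0 : 0 < x.
  rewrite /x /del; apply: mulr_gt0; first lra.
  apply: divr_gt0 => //; apply: mulr_gt0 => //; lra.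
have hxe : x <= eps / 12 by nra.
have hdel0 : 0 < del by rewrite /del; apply: divr_gt0 => //; apply: mulr_gt0 => //; lra.
have hdelx : del <= x by rewrite /x; nra.
have hEd : (1 + del) ^+ d <= 1 + 2 * d%:R * del.
  apply: (@bern del d); first lra.
  rewrite (_ : 2 * d%:R * del = 2 * x); last by rewrite /x; ring.
  lra.
have ed : d = d.-1.+1 by rewrite prednK.
have hc' : mu ^+ d.-1 * (2 * r%:R) < 1.
  have h2r : 0 < 2 * r%:R :> R by lra.
  by move: hc; rewrite -(ltr_pM2r h2r) div1r mulVf // gt_eqF.
set P := mu ^+ d.-1 in hc'.
have hP0 : 0 <= P by apply: exprn_ge0.
have emu : mu ^+ d = mu * P by rewrite {1}ed exprS.
have hEo : r%:R * ((mu + del) ^+ d - mu ^+ d) <= Num.max x (eps / 4).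
  case: (lerP (2 * x) mu) => hcase.
    have hmu0 : 0 < mu by lra.
    set y := del / mu.
    have ey : mu + del = mu * (1 + y) by rewrite /y; field; rewrite gt_eqF.
    have hy0 : 0 <= y by rewrite /y; apply: divr_ge0; lra.
    have hmy : mu * y = del by rewrite /y; field; rewrite gt_eqF.
    have hy : 2 * d%:R * y <= 1.
      rewrite -(ler_pM2r hmu0) mul1r.
      rewrite (_ : 2 * d%:R * y * mu = 2 * x); last by rewrite /x -hmy; ring.
      lra.
    have := bern hy0 hy; rewrite ey exprMn => hb.
    have hmud : 0 <= mu ^+ d by apply: exprn_ge0; lra.
    have h1 : mu ^+ d * (1 + y) ^+ d <= mu ^+ d * (1 + 2 * d%:R * y) by apply: ler_wpM2l.
    have h2 : mu ^+ d * (2 * d%:R * y) = 2 * x * P.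
      by rewrite emu /x -hmy; ring.
    apply: (@le_trans _ _ x); last by rewrite le_max lexx.
    have h3 : mu ^+ d * (1 + y) ^+ d - mu ^+ d <= 2 * x * P by lra.
    have h4 : r%:R * (mu ^+ d * (1 + y) ^+ d - mu ^+ d) <= r%:R * (2 * x * P).
      by apply: ler_wpM2l => //; lra.
    apply: le_trans h4 _.
    nra.
  have h3x : mu + del <= (eps / 4) / al.
    have : (eps / 4) / al = 3 * x by rewrite -hx12; field; rewrite gt_eqF.
    move=> ->; lra.
  have hpow : (mu + del) ^+ d <= ((eps / 4) / al) ^+ d.
    by apply: lerXn2r => //; rewrite nnegrE; lra.
  rewrite expr_div_n hald in hpow.
  have hmud : 0 <= mu ^+ d by apply: exprn_ge0; lra.
  have hr0 : 0 < r%:R :> R by lra.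
  have h5 : r%:R * (mu + del) ^+ d <= (eps / 4) ^+ d.
    have := ler_wpM2l (ltW hr0) hpow; rewrite mulrCA mulfV ?gt_eqF // mulr1 //.
  have h6 : (eps / 4) ^+ d <= eps / 4 by apply: pow_le_self; [lra|lra|exact: hd1].
  apply: (@le_trans _ _ (eps / 4)); last by rewrite le_max lexx orbT.
  have h7 : 0 <= r%:R * mu ^+ d by apply: mulr_ge0; lra.
  rewrite mulrBr; lra.
have hm : Num.max x (eps / 4) <= eps / 4 by rewrite ge_max lexx andbT; lra.
have hd2 : 2 * d%:R * del = 2 * x by rewrite /x; ring.
lra.
Qed.

Lemma numeric2 (mu : R) (d r : nat) :
  (2 <= d)%N -> (1 <= r)%N -> 0 <= mu -> mu ^+ d.-1 < 1 / (2 * r%:R) ->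
  mu ^+ d * r%:R <= 1 / 2.
Proof.
move=> hd hr hmu hc.
have hd1 : (0 < d)%N by apply: leq_trans hd.
have hR : 1 <= r%:R :> R by rewrite (ler_nat R 1 r).
have ed : d = d.-1.+1 by rewrite prednK.
have hc' : mu ^+ d.-1 * (2 * r%:R) < 1.
  have h2r : 0 < 2 * r%:R :> R by lra.
  by move: hc; rewrite -(ltr_pM2r h2r) div1r mulVf // gt_eqF.
have hmu1 : mu <= 1.
  have h1 : (1 <= d.-1)%N by rewrite -ltnS prednK.
  case: (lerP mu 1) => // hm.
  have h2 : 1 <= mu ^+ d.-1 by apply: exprn_ege1; lra.
  have h3 : 1 * (2 * r%:R) <= mu ^+ d.-1 * (2 * r%:R) by apply: ler_wpM2r => //; lra.
  lra.
set P := mu ^+ d.-1 in hc'.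
have hP0 : 0 <= P by apply: exprn_ge0.
rewrite {1}ed exprS -/P.
nra.
Qed.
End Num.

End MH6.
Import MH6.

Module MH7.
Set Implicit Arguments.
Unset Strict Implicit.
Unset Printing Implicit Defensive.
Local Open Scope ring_scope.
Local Open Scope classical_set_scope.

Lemma bigsetI_in (T : Type) (I : eqType) (s : seq I) (X : I -> set T) w :
  (\big[setI/setT]_(j <- s) X j) w <-> (forall j, j \in s -> X j w).
Proof.
elim: s => [|x s IH]; first by rewrite big_nil; split => // _ j; rewrite in_nil.
rewrite big_cons; split.
  move=> [h1 h2] j; rewrite in_cons => /orP [/eqP -> //|hj].
  exact: (proj1 IH h2).
move=> H; split; first by apply: H; rewrite mem_head.
by apply: (proj2 IH) => j hj; apply: H; rewrite in_cons hj orbT.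
Qed.

Section E.
Variable R : realType.
Local Open Scope ereal_scope.
Lemma lee_prod_mono (I : Type) (s : seq I) (f g : I -> \bar R) :
  (forall j, 0 <= f j) -> (forall j, f j <= g j) ->
  \prod_(j <- s) f j <= \prod_(j <- s) g j.
Proof.
move=> h0 h1; elim: s => [|x s IH]; first by rewrite !big_nil.
rewrite !big_cons; apply: lee_pmul => //.
by apply: prode_ge0.
Qed.
End E.

Section B.
Variable R : realType.
Lemma bern_low (x : R) (k : nat) : 0 <= x -> x <= 1 -> 1 - k%:R * x <= (1 - x) ^+ k.
Proof.
move=> h0 h1; elim: k => [|k IH]; first by rewrite expr0 mul0r subr0.
rewrite exprS -natr1.
have hk : 0 <= k%:R :> R by apply: ler0n.
have hp : 0 <= (1 - x) ^+ k by apply: exprn_ge0; lra.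
have : (1 - x) * (1 - k%:R * x) <= (1 - x) * (1 - x) ^+ k by apply: ler_wpM2l => //; lra.
nra.
Qed.
End B.

End MH7.
Import MH7.

Module MH8.
Set Implicit Arguments.
Unset Strict Implicit.
Unset Printing Implicit Defensive.
Local Open Scope ring_scope.
Local Open Scope classical_set_scope.

Lemma mode_JL (R : realType) (C0 eta' e' : R) (D : mx_family R) (m n r : nat)
  (y : 'I_r -> 'cV[R[i]]_n) :
  eta_optimal C0 eta' D -> 0 < e' < 1 -> (m < n)%N -> (0 < r)%N ->
  (forall k, vsqnorm (y k) = 1) ->
  (r * r * 4)%:R <= eta' * expR (e' ^+ 2 * m%:R / C0) ->
  exists F : set (mxT R m n), [/\ measurable F, ((1 - eta')%:E <= D m n F)%E &
     forall A : mxT R m n, F A -> forall k h,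
       nrm (vdot (A *m y k) (A *m y h) - vdot (y k) (y h)) <= 4 * e'].
Proof.
move=> hopt he hmn hr hy hsz.
pose f (p : 'I_r * 'I_r * 'I_4) : 'cV[R[i]]_n := y p.1.1 + ('i ^+ p.2)%C *: y p.1.2.
pose S := undup (map f (enum {: 'I_r * 'I_r * 'I_4})).
have hS : (size S <= r * r * 4)%N.
  apply: leq_trans (size_undup _) _.
  by rewrite size_map -cardT !card_prod !card_ord.
have hSn : S != [::].
  have hr0 : 'I_r by exact: (Ordinal hr).
  have : f (hr0, hr0, ord0) \in S by rewrite mem_undup; apply: map_f; rewrite mem_enum.
  by apply: contraTneq => ->; rewrite in_nil.
have hsz' : (size S)%:R <= eta' * expR (e' ^+ 2 * m%:R / C0).
  apply: le_trans hsz; by rewrite ler_nat.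
have [F [mF FS PF]] := hopt e' m n S he hmn (undup_uniq _) hSn hsz'.
exists F; split => // A FA k h.
apply: gram_err; last 2 first.
- exact: hy.
- exact: hy.
move=> t; have := FS A FA (f (k, h, t)).
apply.
by rewrite mem_undup; apply: map_f; rewrite mem_enum.
Qed.

End MH8.
Import MH8.

Unset Implicit Arguments.
Local Open Scope ring_scope.
Local Open Scope classical_set_scope.

Theorem corollary2 (R : realType) (C0 : R) :
  0 < C0 ->
  exists Ct : R, 0 < Ct /\
  forall (eps eta : R) (d : nat) (n m : 'I_d -> nat) (r : nat)
    (y : 'I_r -> forall l : 'I_d, 'cV[R[i]]_(n l))
    (D : mx_family R)
    (dO : measure_display) (O : measurableType dO) (P : probability O R)
    (A : forall j : 'I_d, O -> mxT R (m j) (n j)),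
    0 < eps < 1 / 2 ->
    0 < eta < 1 / 2 ->
    (2 <= d)%N ->
    (* B is a basis of unit-norm rank-one tensors spanning L *)
    (forall k l, vsqnorm (y k l) = 1) ->
    (forall c : 'I_r -> R[i],
        lincomb (fun k => outer (y k)) c = (fun _ => 0) -> forall k, c k = 0) ->
    (* modewise coherence condition *)
    coherence y ^+ d.-1 < 1 / (2 * r%:R) ->
    (* embedding dimensions *)
    (forall j, (m j < n j)%N) ->
    (forall j, Ct * r%:R `^ (2 / d%:R) * d%:R ^+ 2 * eps ^- 2
                 * ln (2 * r%:R ^+ 2 * d%:R / eta) <= (m j)%:R) ->
    (* A_j drawn independently from an (eta/d)-optimal family *)
    eta_optimal C0 (eta / d%:R) D ->
    (forall j, measurable_fun setT (A j)) ->
    mutually_independent P A ->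
    (forall j (E : set (mxT R (m j) (n j))), measurable E ->
        P (A j @^-1` E) = D (m j) (n j) E) ->
    prob_atleast P
      [set w | forall c : 'I_r -> R[i],
         `| tsqnorm (multi_mode_prod (lincomb (fun k => outer (y k)) c)
                                     (fun j => A j w))
            - tsqnorm (lincomb (fun k => outer (y k)) c) |
         <= eps * tsqnorm (lincomb (fun k => outer (y k)) c)]
      (1 - eta).
Proof.
move=> hC0; exists (4608 * C0); split; first lra.
move=> eps eta d n m r y D dO O P A heps heta hd hy _ hcoh hmn hm hopt hmeas hind hdist.
have [r0|rpos] := eqVneq r 0%N.
  subst r.
  have t0 (nn : 'I_d -> nat) (z : 'I_0 -> forall l, 'cV[R[i]]_(nn l)) (c : 'I_0 -> R[i]) :
      tsqnorm (lincomb (fun k => outer (z k)) c) = 0.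
    by apply: complexI; rewrite tsq_lincomb big_ord0.
  exists setT; split => //.
    move=> w _ c; rewrite /= mmp_lincomb !t0 subrr normr0 mulr0; exact: lexx.
  by rewrite probability_setT lee_fin; lra.
have hr : (0 < r)%N by rewrite lt0n.
case/andP: heps => heps0 heps1; case/andP: heta => heta0 heta1.
have hD2 : 2 <= d%:R :> R by rewrite (ler_nat R 2 d).
have hD0 : 0 < d%:R :> R by lra.
have hR1 : 1 <= r%:R :> R by rewrite (ler_nat R 1 r).
pose al : R := r%:R `^ (1 / d%:R).
have hal0 : 0 <= al by apply: powR_ge0.
have hald : al ^+ d = r%:R.
  rewrite /al -(powR_mulrn _ (powR_ge0 _ _)) -powRrM.
  rewrite (_ : 1 / d%:R * d%:R = 1); first by rewrite powRr1 // ler0n.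
  by rewrite div1r mulVf // gt_eqF.
have hal2 : r%:R `^ (2 / d%:R) = al ^+ 2.
  rewrite /al -(powR_mulrn _ (powR_ge0 _ _)) -powRrM; congr (_ `^ _).
  by rewrite div1r mulrC.
have hal1 : 1 <= al.
  case: (lerP 1 al) => // h.
  have : al ^+ d < 1 by rewrite exprn_ilt1 // -lt0n; apply: leq_trans hd.
  lra.
set del := eps / (12 * d%:R * al).
set e' := del / 4.
have hdel0 : 0 < del by rewrite /del; apply: divr_gt0 => //; apply: mulr_gt0 => //; lra.
have he' : 0 < e' < 1.
  apply/andP; split; first by rewrite /e'; lra.
  have : del <= eps.
    rewrite /del ler_pdivrMr; last by apply: mulr_gt0 => //; lra.
    have : 1 <= 12 * d%:R * al.
      have : 1 <= 12 * d%:R :> R by lra.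
      move=> h1; have h12 : 1 * 1 <= (12 * d%:R) * al by apply: ler_pM => //; lra.
      by rewrite mul1r in h12.
    move=> h; nra.
  rewrite /e'; lra.
set mu := coherence y.
have hmu0 : 0 <= mu.
  rewrite /mu /coherence; elim/big_ind: _ => //; first by move=> x1 x2 h1 h2; rewrite le_max h1.
  move=> l _; elim/big_ind: _ => //; first by move=> x1 x2 h1 h2; rewrite le_max h1.
  move=> k _; elim/big_ind: _ => //; first by move=> x1 x2 h1 h2; rewrite le_max h1.
  by move=> h _; rewrite cmodE nrm_ge0.
have hmu (j : 'I_d) (k h : 'I_r) : k != h -> nrm (vdot (y k j) (y h j)) <= mu.
  move=> nkh; rewrite -cmodE /mu /coherence.
  apply: le_trans (le_bigmax _ _ j); apply: le_trans (le_bigmax _ _ k).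
  by apply: (le_bigmax_cond _ (P := fun h => h != k)); rewrite eq_sym.
have hsz (j : 'I_d) : (r * r * 4)%:R <= eta / d%:R * expR (e' ^+ 2 * (m j)%:R / C0).
  pose Lx := 2 * r%:R ^+ 2 * d%:R / eta.
  have hLx : 0 < Lx.
    rewrite /Lx; apply: divr_gt0 => //; apply: mulr_gt0 => //; apply: mulr_gt0 => //.
    by apply: exprn_gt0; lra.
  have hmj := hm j; rewrite hal2 in hmj.
  have hL : 2 * ln Lx <= e' ^+ 2 * (m j)%:R / C0.
    have key : e' ^+ 2 * (4608 * C0 * al ^+ 2 * d%:R ^+ 2 * eps ^- 2 * ln Lx) / C0 = 2 * ln Lx.
      rewrite /e' /del; field.
      rewrite !gt_eqF //=; lra.
    rewrite -key; apply: ler_wpM2r; first by rewrite invr_ge0; lra.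
    apply: ler_wpM2l; first exact: sqr_ge0.
    exact: hmj.
  have hexp : expR (2 * ln Lx) = Lx ^+ 2.
    rewrite (_ : 2 * ln Lx = ln Lx + ln Lx); last by ring.
    by rewrite expRD lnK ?expr2 // posrE.
  have h1 : eta / d%:R * Lx ^+ 2 <= eta / d%:R * expR (e' ^+ 2 * (m j)%:R / C0).
    rewrite -hexp; apply: ler_wpM2l; first by apply: divr_ge0; lra.
    by rewrite ler_expR.
  apply: le_trans h1.
  have e1 : eta / d%:R * Lx ^+ 2 = 4 * r%:R ^+ 4 * (d%:R / eta).
    rewrite /Lx; field; rewrite !gt_eqF //=; lra.
  rewrite e1 !natrM.
  have hde : 1 <= d%:R / eta by rewrite ler_pdivlMr //; lra.
  have hr4 : r%:R ^+ 2 <= r%:R ^+ 4 :> R.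
    rewrite (_ : 4%N = (2 * 2)%N) // exprM; have h := exprn_ege1 2 hR1.
    by rewrite -{1}[_ ^+ 2]mul1r [X in _ <= X]expr2; apply: ler_wpM2r; lra.
  have h2 : 0 <= r%:R ^+ 4 :> R by apply: exprn_ge0; lra.
  rewrite (_ : r%:R * r%:R * 4%:R = 4 * r%:R ^+ 2 :> R); last by rewrite expr2; ring.
  nra.
have HF (j : 'I_d) : exists F : set (mxT R (m j) (n j)),
    [/\ measurable F, ((1 - eta / d%:R)%:E <= D (m j) (n j) F)%E &
     forall B : mxT R (m j) (n j), F B -> forall k h,
       nrm (vdot (B *m y k j) (B *m y h j) - vdot (y k j) (y h j)) <= 4 * e'].
  apply: (@mode_JL R C0 (eta / d%:R) e' D (m j) (n j) r (fun k => y k j) hopt he' (hmn j) hr).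
    by move=> k; apply: hy.
  exact: hsz.
pose FF (j : 'I_d) := projT1 (cid (HF j)).
have FFP (j : 'I_d) := projT2 (cid (HF j)).
have mFF (j : 'I_d) : measurable (FF j) by case: (FFP j).
exists [set w | forall j, FF j (A j w)]; split.
- have -> : [set w | forall j, FF j (A j w)] = \big[setI/setT]_(j <- enum 'I_d) (A j @^-1` FF j).
    apply/seteqP; split => w /=.
      by move=> H; apply/bigsetI_in => j _; apply: H.
    by move/bigsetI_in => H j; apply: H; rewrite mem_enum.
  apply: bigsetI_measurable => j _.
  by have := hmeas j measurableT (FF j) (mFF j); rewrite setTI.
- move=> w Gw c /=.
  have Hg (j : 'I_d) (k h : 'I_r) :
      nrm (vdot (A j w *m y k j) (A j w *m y h j) - vdot (y k j) (y h j)) <= del.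
    case: (FFP j) => _ _ H; have := H (A j w) (Gw j) k h.
    move=> h'; apply: le_trans h' _; rewrite /e'; lra.
  rewrite mmp_lincomb.
  pose ga := (fun (j : 'I_d) (k h : 'I_r) => vdot (A j w *m y k j) (A j w *m y h j)).
  pose gg := (fun (j : 'I_d) (k h : 'I_r) => vdot (y k j) (y h j)).
  have etA : (tsqnorm (lincomb (fun k => outer (fun j => A j w *m y k j)) c))%:C%C = Qf c ga.
    by rewrite tsq_lincomb.
  have et : (tsqnorm (lincomb (fun k => outer (y k)) c))%:C%C = Qf c gg.
    by rewrite tsq_lincomb.
  have Hg1 (j : 'I_d) (k : 'I_r) : gg j k k = 1 by rewrite /gg -vsqC hy.
  have hA := errA c (a := ga) (g := gg) (ltW hdel0) hmu0 Hg Hg1 (fun j k h nkh => hmu j k h nkh).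
  have hB := errB c (g := gg) hmu0 Hg1 (fun j k h nkh => hmu j k h nkh).
  have hN := numeric heps0 heps1 hd hr hal1 hald hmu0 hcoh.
  rewrite -/del in hN.
  have hN2 := numeric2 hd hr hmu0 hcoh.
  have hS0 := Sc_ge0 c.
  set tA := tsqnorm (lincomb (fun k => outer (fun j => A j w *m y k j)) c) in etA *.
  set t := tsqnorm (lincomb (fun k => outer (y k)) c) in et *.
  have eA : `|tA - t| = nrm (Qf c ga - Qf c gg) by rewrite -etA -et -rmorphB nrmR.
  have ht : Sc c - nrm (Qf c gg - (Sc c)%:C%C) <= t.
    have := Re_le_nrm (- (Qf c gg - (Sc c)%:C%C)); rewrite nrmN.
    have -> : t = complex.Re (Qf c gg) by rewrite -et.
    case: (Qf c gg) => a b /=; lra.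
  set B1 := (1 + del) ^+ d - 1 + r%:R * ((mu + del) ^+ d - mu ^+ d) in hA hN.
  have h1 : B1 * Sc c <= eps / 2 * Sc c by apply: ler_wpM2r.
  have h2 : mu ^+ d * r%:R * Sc c <= 1 / 2 * Sc c by apply: ler_wpM2r.
  have h3 : 0 <= t by lra.
  have h4 : eps * (Sc c / 2) <= eps * t by apply: ler_wpM2l; lra.
  rewrite eA; lra.
- rewrite (hind FF mFF).
  have e1 : (\prod_(j < d) P (A j @^-1` FF j) = \prod_(j < d) D (m j) (n j) (FF j))%E.
    by apply: eq_bigr => j _; apply: hdist.
  rewrite e1.
  apply: (@le_trans _ _ (\prod_(j < d) (1 - eta / d%:R)%:E)%E); last first.
    apply: lee_prod_mono => j; first by rewrite lee_fin; rewrite subr_ge0 ler_pdivrMr //; lra.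
    by case: (FFP j).
  rewrite prodEFin lee_fin prodr_const card_ord.
  have := @bern_low R (eta / d%:R) d; rewrite [d%:R * _]mulrC divfK ?gt_eqF //; apply.
    by apply: divr_ge0; lra.
  by rewrite ler_pdivrMr //; lra.
Qed.
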